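(* Let $\vec d=(\vec a,\vec b)$ be a bidegree sequence of length $n$ with $\sum_i a_i=\sum_i b_i=n\bar c$ and $m:=\min\vec d\in[1..n]$. Define $k_*=m+\sqrt{m^2+n(\bar c-2m)}$, and let $k=\lceil k_*\rceil$ if $m^2+n(\bar c-2m)\ge0$ (i.e. $k_*$ is real) and $k=1$ otherwise. If $$\max\vec d\le\min\Big(\Big\lfloor n\frac{\bar c-m}{k}+m\Big\rfloor,\ n\Big),$$ then $\vec d$ is graphic with loops.
   Context: A bidegree sequence of length $n$ is a pair $\vec d=(\vec a,\vec b)$ with $\vec a=(a_1,\dots,a_n)\in\mathbb{N}_0^n$ and $\vec b=(b_1,\dots,b_n)\in\mathbb{N}_0^n$. It is graphic with loops if there is an $n\times n$ matrix with entries in $\{0,1\}$ whose $i$th row sum is $a_i$ and whose $i$th column sum is $b_i$ for every $i\in[1..n]$; it is graphic if such a matrix exists with all diagonal entries equal to $0$. $\max\vec d$ and $\min\vec d$ denote the maximum and minimum over all $2n$ entries $a_1,\dots,a_n,b_1,\dots,b_n$. The number $\bar c$ (the average degree) is defined by $\sum_i a_i=\sum_i b_i=n\bar c$. For integers $a\le b$, $[a..b]:=\{x\in\mathbb{Z}:a\le x\le b\}$. *)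

(* Defs.v *)
From HB Require Import structures.
From mathcomp Require Import all_boot all_order all_algebra.
Set Implicit Arguments. Unset Strict Implicit. Unset Printing Implicit Defensive.
Import Order.TTheory GRing.Theory Num.Theory.

Definition bideg_entries (n : nat) (a b : 'I_n -> nat) : seq nat :=
  [seq a i | i <- enum 'I_n] ++ [seq b i | i <- enum 'I_n].

Definition maxd (n : nat) (a b : 'I_n -> nat) : nat :=
  \max_(x <- bideg_entries a b) x.

(* min d : minimum over all 2n entries (the neutral element maxd makes this
   the true minimum whenever n >= 1) *)
Definition mind (n : nat) (a b : 'I_n -> nat) : nat :=
  \big[minn/maxd a b]_(x <- bideg_entries a b) x.

Definition graphic_with_loops (n : nat) (a b : 'I_n -> nat) : Prop :=
  exists M : 'M[nat]_n,
    (forall i j, M i j <= 1) /\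
    (forall i, \sum_(j < n) M i j = a i) /\
    (forall j, \sum_(i < n) M i j = b j).

(* Main.v *)
Require Import Defs.
From HB Require Import structures.
From mathcomp Require Import all_boot all_order all_algebra.
From mathcomp Require Import zify ring lra.
Import Order.TTheory GRing.Theory Num.Theory.

Module Ma.
Set Implicit Arguments. Unset Strict Implicit. Unset Printing Implicit Defensive.

Lemma select_top (I : finType) (f : I -> nat) (A : {set I}) k :
  k <= #|A| -> exists P : {set I},
    [/\ P \subset A, #|P| = k &
        forall i j, i \in P -> j \in A -> j \notin P -> f j <= f i].
Proof.
elim: k => [|k IH] hk.
  by exists set0; split => //; [exact: sub0set | rewrite cards0 | move=> i j; rewrite inE].
have [P [sPA cP HP]] := IH (ltnW hk).
have : 0 < #|A :\: P| by rewrite cardsD (setIidPr sPA) cP subn_gt0.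
case/card_gt0P => x0 Hx0.
case: (arg_maxnP f Hx0) => x Hx Hmax.
exists (x |: P); split.
- by rewrite subUset sub1set sPA andbT; move: Hx => /setDP[].
- by rewrite cardsU1; move: Hx => /setDP[_ ->]; rewrite cP.
- move=> i j; rewrite !inE negb_or => /orP[/eqP->|iP] jA /andP[jx jP].
    by apply: Hmax; apply/setDP.
  exact: HP.
Qed.

Lemma sum_split c (T : nat -> bool) (F : nat -> nat) :
  \sum_(j < c.+1 | T j) F j = \sum_(j < c | T j) F j + (if T c then F c else 0).
Proof. by rewrite big_mkcond big_ord_recr /= -big_mkcond. Qed.

Lemma eq_bigl_lt c (T T' : nat -> bool) (F : nat -> nat) :
  (forall j, j < c -> T j = T' j) ->
  \sum_(j < c | T j) F j = \sum_(j < c | T' j) F j.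
Proof. by move=> H; apply: eq_bigl => j; apply: H. Qed.

Lemma sum_ind (I : finType) (S P : {set I}) :
  \sum_(i in S) ((i \in P) : nat) = #|S :&: P|.
Proof.
rewrite -sum1_card big_mkcond [RHS]big_mkcond /=.
by apply: eq_bigr => i _; rewrite inE; case: (i \in S); case: (i \in P).
Qed.

Lemma sum_sub_ind (I : finType) (S P : {set I}) (a : I -> nat) :
  (forall i, i \in P -> 0 < a i) ->
  \sum_(i in S) (a i - (i \in P)) + #|S :&: P| = \sum_(i in S) a i.
Proof.
move=> HP; rewrite -sum_ind -big_split /=; apply: eq_bigr => i _.
by case: (boolP (i \in P)) => iP /=; [rewrite subnK // HP | rewrite subn0 addn0].
Qed.

Lemma realize (I : finType) c : forall (a : I -> nat) (b : nat -> nat),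
  \sum_i a i = \sum_(j < c) b j ->
  (forall (S : {set I}) (T : nat -> bool),
     \sum_(i in S) a i <= #|S| * \sum_(j < c | T j) 1 + \sum_(j < c | ~~ T j) b j) ->
  exists F : I -> nat -> nat, [/\ (forall i j, F i j <= 1),
    (forall i, \sum_(j < c) F i j = a i) & (forall j, j < c -> \sum_i F i j = b j)].
Proof.
elim: c => [|c IH] a b Hsum Hcut.
  exists (fun _ _ => 0); split => // i.
  rewrite big_ord0; symmetry; apply/eqP; rewrite -leqn0.
  by rewrite big_ord0 in Hsum; rewrite -Hsum (bigD1 i) //= leq_addr.
have Hsum' : \sum_i a i = \sum_(j < c) b j + b c by rewrite Hsum big_ord_recr.
set Z := [set i | 0 < a i].
have sumZ : forall S : {set I}, \sum_(i in S :&: Z) a i = \sum_(i in S) a i.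
  move=> S; rewrite [RHS](big_setID Z) /=.
  by rewrite [X in _ + X]big1 ?addn0 // => i; rewrite !inE lt0n negbK => /andP[/eqP].
have bcZ : b c <= #|Z|.
  have := Hcut Z (fun j => j == c).
  rewrite (sum_split c (fun j => j == c) (fun _ => 1)) (sum_split c (fun j => ~~ (j == c)) b) eqxx /=.
  rewrite (eq_bigl_lt (T := fun j => j == c) (T' := fun _ => false) (fun _ => 1)); last by move=> j /ltn_eqF ->.
  rewrite (eq_bigl_lt (T := fun j => ~~ (j == c)) (T' := fun _ => true) b); last by move=> j /ltn_eqF ->.
  rewrite big_pred0_eq add0n addn0 muln1.
  have := sumZ setT; rewrite setTI => ->.
  have E : \sum_(i in [set: I]) a i = \sum_i a i by apply: eq_bigl => i; rewrite inE.
  rewrite E Hsum'.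
  lia.
have [P [sPZ cP HP]] := select_top a bcZ.
have Ppos : forall i, i \in P -> 0 < a i.
  by move=> i iP; have := subsetP sPZ i iP; rewrite inE.
set a' := fun i => a i - (i \in P).
have Ha' : forall S : {set I}, \sum_(i in S) a' i + #|S :&: P| = \sum_(i in S) a i.
  by move=> S; apply: sum_sub_ind.
have [F [F1 Frow Fcol]] : exists F : I -> nat -> nat, [/\ (forall i j, F i j <= 1),
    (forall i, \sum_(j < c) F i j = a' i) & (forall j, j < c -> \sum_i F i j = b j)].
  apply: IH.
    have := Ha' setT; rewrite setTI cP.
    have E1 : forall g : I -> nat, \sum_(i in [set: I]) g i = \sum_i g i by move=> g; apply: eq_bigl => i; rewrite inE.
    rewrite !E1.
    rewrite Hsum'; lia.
  move=> S T.
  set t := \sum_(j < c | T j) 1; set r := \sum_(j < c | ~~ T j) b j.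
  have HS := Ha' S.
  case: (boolP [exists x in P :\: S, a x <= t]).
  - case/exists_inP => x xPS axt.
    have H1 := Hcut (S :&: P) (fun j => T j || (j == c)).
    rewrite (sum_split c (fun j => T j || (j == c)) (fun _ => 1)) (sum_split c (fun j => ~~ (T j || (j == c))) b) eqxx orbT /= in H1.
    rewrite (eq_bigl_lt (T := fun j => T j || (j == c)) (T' := T) (fun _ => 1)) in H1; last by move=> j /ltn_eqF ->; rewrite orbF.
    rewrite (eq_bigl_lt (T := fun j => ~~ (T j || (j == c))) (T' := fun j => ~~ T j) b) in H1; last by move=> j /ltn_eqF ->; rewrite orbF.
    rewrite -/t -/r in H1.
    have H2 : \sum_(i in S :\: P) a i <= #|S :\: P| * t.
      rewrite -sum_nat_const; apply: leq_sum => i; rewrite inE => /andP[iP iS].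
      case: (boolP (i \in Z)) => iZ.
        by apply: leq_trans axt; apply: HP => //; move: xPS; rewrite inE => /andP[].
      by move: iZ; rewrite inE -eqn0Ngt => /eqP ->.
    have H3 := Ha' (S :&: P).
    rewrite (_ : (S :&: P) :&: P = S :&: P) in H3; last by rewrite -setIA setIid.
    have H4 : \sum_(i in S) a' i = \sum_(i in S :&: P) a' i + \sum_(i in S :\: P) a i.
      rewrite (big_setID P) /=; congr (_ + _); apply: eq_bigr => i.
      by rewrite /a' inE => /andP[/negbTE -> _]; rewrite subn0.
    have H5 := cardsID P S.
    rewrite H4; nia.
  - rewrite negb_exists_in => /forall_inP Hbig.
    have H1 := Hcut (S :|: P) (fun j => T j && (j != c)).
    rewrite (sum_split c (fun j => T j && (j != c)) (fun _ => 1)) (sum_split c (fun j => ~~ (T j && (j != c))) b) eqxx andbF /= in H1.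
    rewrite (eq_bigl_lt (T := fun j => T j && (j != c)) (T' := T) (fun _ => 1)) in H1; last by move=> j /ltn_eqF ->; rewrite andbT.
    rewrite (eq_bigl_lt (T := fun j => ~~ (T j && (j != c))) (T' := fun j => ~~ T j) b) in H1; last by move=> j /ltn_eqF ->; rewrite andbT.
    rewrite -/t -/r in H1.
    have H2 : #|P :\: S| * t.+1 <= \sum_(i in P :\: S) a i.
      rewrite -sum_nat_const; apply: leq_sum => i iPS.
      by have := Hbig i iPS; rewrite -ltnNge.
    have H3 : \sum_(i in S :|: P) a i = \sum_(i in S) a i + \sum_(i in P :\: S) a i.
      rewrite (big_setID S) /=; congr (_ + _).
        by apply: eq_bigl => i; rewrite !inE; case: (i \in S); case: (i \in P).
      by apply: eq_bigl => i; rewrite !inE; case: (i \in S); case: (i \in P).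
    have H5 := cardsID S (S :|: P).
    rewrite (_ : (S :|: P) :&: S = S) in H5; last by apply/setP => i; rewrite !inE; case: (i \in S); case: (i \in P).
    rewrite (_ : (S :|: P) :\: S = P :\: S) in H5; last by apply/setP => i; rewrite !inE; case: (i \in S); case: (i \in P).
    have H6 := cardsID S P.
    rewrite setIC in H6.
    nia.
exists (fun i j => if j == c then ((i \in P) : nat) else F i j); split.
- by move=> i j; case: (j == c) => //; case: (i \in P).
- move=> i; rewrite big_ord_recr /= eqxx.
  under eq_bigr => j _ do rewrite (ltn_eqF (ltn_ord j)).
  rewrite Frow /a'; have := Ppos i; case: (i \in P) => //= h; rewrite subnK //; exact: h.
- move=> j; rewrite ltnS leq_eqVlt => /orP[/eqP ->|jc].
    rewrite -cP -sum1_card [RHS]big_mkcond /=; apply: eq_bigr => i _; rewrite eqxx.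
    by case: (i \in P).
  by rewrite (ltn_eqF jc); apply: Fcol.
Qed.

End Ma.
Import Ma.

Module Mc.
Set Implicit Arguments. Unset Strict Implicit. Unset Printing Implicit Defensive.
Local Open Scope ring_scope.

Lemma div_d (d X : int) : 0 < d -> 0 <= d * X -> 0 <= X.
Proof. by move=> hd; rewrite pmulr_rge0. Qed.

Lemma div_dd (d X : int) : 0 < d -> 0 <= d * d * X -> 0 <= X.
Proof. by move=> hd; rewrite pmulr_rge0 ?mulr_gt0. Qed.

Lemma core (n m M N s t : int) :
  1 <= m -> m <= M -> M <= n -> n * m <= N -> N <= n * M ->
  0 <= s -> s <= n -> 0 <= t -> t <= n ->
  (m * m + N - 2 * n * m < 0 \/
    (0 <= N - n * m - m * (M - m) /\
     (m * m + N - 2 * n * m) * ((M - m) * (M - m)) <=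
       (N - n * m - m * (M - m)) * (N - n * m - m * (M - m)))) ->
  [\/ s * M <= s * t + (n - t) * m, s * M <= s * t + N - t * M,
      N - (n - s) * m <= s * t + (n - t) * m | N - (n - s) * m <= s * t + N - t * M].
Proof.
move=> h1 h2 h3 h4 h5 h6 h7 h8 h9 QC.
have QCe : 0 <= (N - n * m - m * (M - m)) * (N - n * m - m * (M - m))
               - (m * m + N - 2 * n * m) * ((M - m) * (M - m)).
  case: QC => [hD|[_ hq]]; last by lia.
  have : 0 <= (N - n * m - m * (M - m)) * (N - n * m - m * (M - m)) by rewrite -expr2 sqr_ge0.
  have : 0 <= (- (m * m + N - 2 * n * m)) * ((M - m) * (M - m)) by apply: mulr_ge0; [lia|apply: mulr_ge0; lia].
  lia.
case: (lerP M t) => htM.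
  constructor 1.
  have : 0 <= s * (t - M) by apply: mulr_ge0; lia.
  have : 0 <= (n - t) * m by apply: mulr_ge0; lia.
  lia.
case: (lerP t m) => htm.
  constructor 4.
  case: (lerP s M) => hsM.
    have : 0 <= (m - t) * (M - s) by apply: mulr_ge0; lia.
    have : 0 <= m * (n - M) by apply: mulr_ge0; lia.
    lia.
  have : 0 <= t * (s - M) by apply: mulr_ge0; lia.
  have : 0 <= m * (n - s) by apply: mulr_ge0; lia.
  lia.
case: (lerP s m) => hsm.
  constructor 1.
  have : 0 <= (m - s) * (M - t) by apply: mulr_ge0; lia.
  have : 0 <= m * (n - M) by apply: mulr_ge0; lia.
  lia.
case: (lerP M s) => hsM.
  constructor 4.
  have : 0 <= t * (s - M) by apply: mulr_ge0; lia.
  have : 0 <= m * (n - s) by apply: mulr_ge0; lia.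
  lia.
have hd : 0 < M - m by lia.
case: (lerP (s * (M - m)) (N - n * m)) => hs; case: (lerP (t * (M - m)) (N - n * m)) => ht.
- constructor 2.
  suff : 0 <= (M - m) * (M - m) * (s * t + N - t * M - s * M) by move/(div_dd hd); lia.
  have F1 : 0 <= (N - n * m - s * (M - m)) * (M - t) * (M - m).
    by apply: mulr_ge0; [apply: mulr_ge0|]; lia.
  case: (lerP (M * (M - m)) (N - n * m)) => hMd.
    have : 0 <= (t - m) * (N - n * m - M * (M - m)) * (M - m) by apply: mulr_ge0; [apply: mulr_ge0|]; lia.
    have : 0 <= m * (M - m) * (n - M) * (M - m) by apply: mulr_ge0; [apply: mulr_ge0; [apply: mulr_ge0|]|]; lia.
    lia.
  have : 0 <= (N - n * m - t * (M - m)) * (M * (M - m) - (N - n * m)) by apply: mulr_ge0; lia.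
  lia.
- constructor 1.
  suff : 0 <= (M - m) * (M - m) * (s * t + (n - t) * m - s * M) by move/(div_dd hd); lia.
  have F1 : 0 <= (N - n * m - s * (M - m)) * (M - t) * (M - m).
    by apply: mulr_ge0; [apply: mulr_ge0|]; lia.
  case: (lerP (N - n * m) (m * (M - m))) => hmd.
    have : 0 <= (M - t) * (m * (M - m) - (N - n * m)) * (M - m) by apply: mulr_ge0; [apply: mulr_ge0|]; lia.
    have : 0 <= m * (M - m) * (n - M) * (M - m) by apply: mulr_ge0; [apply: mulr_ge0; [apply: mulr_ge0|]|]; lia.
    lia.
  have : 0 <= (t * (M - m) - (N - n * m)) * ((N - n * m) - m * (M - m)) by apply: mulr_ge0; lia.
  lia.
- constructor 4.
  suff : 0 <= (M - m) * (M - m) * (s * t + N - t * M - (N - (n - s) * m)) by move/(div_dd hd); lia.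
  have F1 : 0 <= (N - n * m - t * (M - m)) * (M - s) * (M - m).
    by apply: mulr_ge0; [apply: mulr_ge0|]; lia.
  case: (lerP (N - n * m) (m * (M - m))) => hmd.
    have : 0 <= (M - s) * (m * (M - m) - (N - n * m)) * (M - m) by apply: mulr_ge0; [apply: mulr_ge0|]; lia.
    have : 0 <= m * (M - m) * (n - M) * (M - m) by apply: mulr_ge0; [apply: mulr_ge0; [apply: mulr_ge0|]|]; lia.
    lia.
  have : 0 <= (s * (M - m) - (N - n * m)) * ((N - n * m) - m * (M - m)) by apply: mulr_ge0; lia.
  lia.
- constructor 3.
  suff : 0 <= (M - m) * (M - m) * (s * t + (n - t) * m - (N - (n - s) * m)) by move/(div_dd hd); lia.
  case: QC => [hD|[hE hq]].
    have : 0 <= (s - m) * (t - m) * ((M - m) * (M - m)) by apply: mulr_ge0; [apply: mulr_ge0|apply: mulr_ge0]; lia.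
    have : 0 <= (- (m * m + N - 2 * n * m)) * ((M - m) * (M - m)) by apply: mulr_ge0; [lia|apply: mulr_ge0; lia].
    lia.
  have : 0 <= ((s - m) * (M - m) - (N - n * m - m * (M - m))) * ((t - m) * (M - m)) by apply: mulr_ge0; lia.
  have : 0 <= (N - n * m - m * (M - m)) * ((t - m) * (M - m) - (N - n * m - m * (M - m))) by apply: mulr_ge0; lia.
  lia.
Qed.

End Mc.
Import Mc.

Module Md.
Set Implicit Arguments. Unset Strict Implicit. Unset Printing Implicit Defensive.

Lemma bigmin_le (l : seq nat) z x : x \in l -> \big[minn/z]_(y <- l) y <= x.
Proof.
elim: l => [|y l IH] //; rewrite inE big_cons => /orP[/eqP ->|xl].
  exact: geq_minl.
by apply: leq_trans (geq_minr _ _) (IH xl).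
Qed.

Lemma entries_bounds n (a b : 'I_n -> nat) x :
  x \in bideg_entries a b -> mind a b <= x <= maxd a b.
Proof.
move=> hx; apply/andP; split; first exact: bigmin_le.
by rewrite /maxd; apply: (@leq_bigmax_seq _ _ xpredT id x).
Qed.

Lemma a_in n (a b : 'I_n -> nat) i : a i \in bideg_entries a b.
Proof. by rewrite /bideg_entries mem_cat map_f ?mem_enum. Qed.

Lemma b_in n (a b : 'I_n -> nat) i : b i \in bideg_entries a b.
Proof. by rewrite /bideg_entries mem_cat orbC map_f ?mem_enum. Qed.

End Md.
Import Md.

Module Me.
Set Implicit Arguments. Unset Strict Implicit. Unset Printing Implicit Defensive.
Local Open Scope ring_scope.

Lemma qc_real (R : archiRcfType) (n m M N : nat) : (0 < n)%N -> (0 < m)%N -> (m <= M)%N ->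
  let cbar : R := (N%:R / n%:R) in
  let D : R := (m%:R ^+ 2 + n%:R * (cbar - 2 * m%:R)) in
  let k : int := if 0 <= D then Num.ceil (m%:R + Num.sqrt D) else 1%Z in
  ((M%:Z) <= Num.floor (n%:R * (cbar - m%:R) / k%:~R + m%:R)) ->
  let n' := n%:Z in let m' := m%:Z in let M' := M%:Z in let N' := N%:Z in
  (m' * m' + N' - 2 * n' * m' < 0 \/
    (0 <= N' - n' * m' - m' * (M' - m') /\
     (m' * m' + N' - 2 * n' * m') * ((M' - m') * (M' - m')) <=
       (N' - n' * m' - m' * (M' - m')) * (N' - n' * m' - m' * (M' - m')))).
Proof.
move=> n0 m0 mM cbar D k Hfl n' m' M' N'.
have nR : (n%:R : R) != 0 by rewrite pnatr_eq0 -lt0n.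
have hD : D = (m' * m' + N' - 2 * n' * m')%:~R.
  rewrite /D /cbar !(intrD, intrM, intrB) /=.
  by field.
case: (lerP 0 D) => hD0; last first.
  by left; rewrite -(ltr_int R) -hD.
right.
move: Hfl; rewrite /k hD0 /= => Hfl.
set q := Num.sqrt D in Hfl *.
have hq0 : 0 <= q by apply: sqrtr_ge0.
have hqq : q ^+ 2 = D by apply: sqr_sqrtr.
set kk := Num.ceil _ in Hfl.
have hk : m%:R + q <= (kk%:~R : R) by apply: ceil_ge.
have hm0 : 1 <= (m%:R : R) by rewrite ler1n.
have kpos : 0 < (kk%:~R : R) by lra.
have HM : (M%:R : R) <= n%:R * (cbar - m%:R) / kk%:~R + m%:R.
  rewrite -(ler_int R) in Hfl.
  apply: le_trans Hfl _; exact: floor_le.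
have hX : (n%:R : R) * (cbar - m%:R) = N%:R - n%:R * m%:R by rewrite /cbar; field.
rewrite hX in HM.
have h1 : ((M%:R : R) - m%:R) * kk%:~R <= ((N%:R - n%:R * m%:R) / kk%:~R) * kk%:~R.
  by apply: ler_wpM2r; lra.
rewrite divfK ?gt_eqF // in h1.
have hd : (m%:R : R) <= M%:R by rewrite ler_nat.
have p1 : 0 <= ((kk%:~R : R) - m%:R - q) * (M%:R - m%:R) by apply: mulr_ge0; lra.
have p2 : 0 <= q * (M%:R - m%:R) by apply: mulr_ge0; lra.
have hE : q * (M%:R - m%:R) <= (N%:R : R) - n%:R * m%:R - m%:R * (M%:R - m%:R) by nra.
have p3 : 0 <= ((N%:R : R) - n%:R * m%:R - m%:R * (M%:R - m%:R) - q * (M%:R - m%:R)) *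
               ((N%:R : R) - n%:R * m%:R - m%:R * (M%:R - m%:R) + q * (M%:R - m%:R)).
  by apply: mulr_ge0; lra.
split.
  rewrite -(ler_int R) !(intrD, intrM, intrB) /=; lra.
rewrite hD !(intrD, intrM, intrB) /= in hqq.
rewrite -(ler_int R) !(intrD, intrM, intrB) /= -hqq.
nra.
Qed.

End Me.
Import Me.


Theorem theorem5 (R : archiRcfType) (n : nat) (a b : 'I_n -> nat) :
  \sum_(i < n) a i = \sum_(i < n) b i ->
  let m : nat := mind a b in
  (1 <= m <= n)%N ->
  let cbar : R := ((\sum_(i < n) a i)%:R / n%:R)%R in
  let D : R := ((m%:R) ^+ 2 + n%:R * (cbar - 2 * m%:R))%R in
  let k : int := if (0 <= D)%R then Num.ceil (m%:R + Num.sqrt D)%R else 1%Z in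
  ((maxd a b)%:Z <= Num.floor (n%:R * (cbar - m%:R) / k%:~R + m%:R))%R ->
  (maxd a b <= n)%N ->
  graphic_with_loops a b.
Proof.
move: n a b => [|n] a b Hab m Hm cbar D k Hfl HMn.
  by case/andP: Hm => h1 h2; move: (leq_trans h1 h2).
have Ha : forall i, (m <= a i <= maxd a b)%N by move=> i; apply: entries_bounds; apply: a_in.
have Hb : forall i, (m <= b i <= maxd a b)%N by move=> i; apply: entries_bounds; apply: b_in.
have m0 : (0 < m)%N by case/andP: Hm.
have mM : (m <= maxd a b)%N by case/andP: (Ha ord0) => h1 h2; apply: leq_trans h2.
have QC := @qc_real R n.+1 m (maxd a b) (\sum_(i < n.+1) a i) erefl m0 mM Hfl.
set M := maxd a b in HMn Ha Hb mM QC.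
set N := \sum_(i < n.+1) a i in QC.
set bn := fun j : nat => b (inord j).
have Ebn : forall P : nat -> bool, \sum_(j < n.+1 | P j) bn j = \sum_(j < n.+1 | P j) b j.
  by move=> P; apply: eq_bigr => j _; rewrite /bn inord_val.
have Hsum : \sum_i a i = \sum_(j < n.+1) bn j by rewrite (Ebn xpredT) Hab.
have Hcut : forall (S : {set 'I_n.+1}) (T : nat -> bool),
     (\sum_(i in S) a i <= #|S| * \sum_(j < n.+1 | T j) 1 + \sum_(j < n.+1 | ~~ T j) bn j)%N.
  move=> S T.
  have f1 : (\sum_(i in S) a i <= #|S| * M)%N.
    rewrite -sum_nat_const; apply: leq_sum => i _; by case/andP: (Ha i).
  have f6 : (\sum_(i in S) a i + \sum_(i in ~: S) a i = N)%N.
    rewrite /N [RHS](bigID (mem S)) /=; congr (_ + _).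
    by apply: eq_bigl => i; rewrite inE.
  have f2 : (\sum_(i in S) a i + (n.+1 - #|S|) * m <= N)%N.
    rewrite -f6 leq_add2l.
    have -> : (n.+1 - #|S| = #|~: S|)%N by have := cardsC S; rewrite card_ord; lia.
    rewrite -sum_nat_const.
    by apply: leq_sum => i _; case/andP: (Ha i).
  have f3 : (\sum_(j < n.+1 | T j) 1 + \sum_(j < n.+1 | ~~ T j) 1 = n.+1)%N.
    have e : (\sum_(j < n.+1) 1 = n.+1)%N by rewrite big_const_ord iter_addn_0 mul1n.
    transitivity (\sum_(j < n.+1) 1)%N; last exact: e.
    by rewrite [RHS](bigID (fun j : 'I_n.+1 => T j)).
  have f4 : ((\sum_(j < n.+1 | ~~ T j) 1) * m <= \sum_(j < n.+1 | ~~ T j) bn j)%N.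
    rewrite (Ebn (fun j => ~~ T j)) big_distrl /=; apply: leq_sum => j _; rewrite mul1n; by case/andP: (Hb j).
  have f5 : (N <= (\sum_(j < n.+1 | T j) 1) * M + \sum_(j < n.+1 | ~~ T j) bn j)%N.
    rewrite (Ebn (fun j => ~~ T j)) /N Hab [X in (X <= _)%N](bigID (fun j : 'I_n.+1 => T j)) /= leq_add2r big_distrl /=.
    by apply: leq_sum => j _; rewrite mul1n; case/andP: (Hb j).
  have Hs : (#|S| <= n.+1)%N by rewrite -[X in (_ <= X)%N]card_ord max_card.
  have hN1 : (n.+1 * m <= N)%N.
    rewrite /N -[X in (X * _)%N]card_ord -sum_nat_const; apply: leq_sum => i _; by case/andP: (Ha i).
  have hN2 : (N <= n.+1 * M)%N.
    rewrite /N -[X in (X * _)%N]card_ord -sum_nat_const; apply: leq_sum => i _; by case/andP: (Ha i).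
  have := @core n.+1 m M N #|S| (\sum_(j < n.+1 | T j) 1)%N.
  move: QC f1 f2 f3 f4 f5 Hs hN1 hN2 m0 mM HMn.
  set t := \sum_(j < n.+1 | T j) 1.
  set L := \sum_(i in S) a i.
  set Rr := \sum_(j < n.+1 | ~~ T j) bn j.
  set t' := \sum_(j < n.+1 | ~~ T j) 1.
  set s := #|S|.
  move=> QC f1 f2 f3 f4 f5 Hs hN1 hN2 m0 mM HMn Hc.
  have := Hc ltac:(clear -m0; lia) ltac:(clear -mM; lia) ltac:(clear -HMn; lia)
    ltac:(clear -hN1; lia) ltac:(clear -hN2; lia) ltac:(clear -Hs; lia) ltac:(clear -Hs; lia)
    ltac:(clear -f3; lia) ltac:(clear -f3; lia) QC.
  have e1 : t' = (n.+1 - t)%N by clear -f3; lia.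
  rewrite e1 in f4.
  have ht : (t <= n.+1)%N by clear -f3; lia.
  have f4' : (n.+1 * m <= Rr + t * m)%N.
    move: f4; rewrite mulnBl; have := leq_mul ht (leqnn m); clear; lia.
  have f2' : (L + n.+1 * m <= N + s * m)%N.
    move: f2; rewrite mulnBl; have := leq_mul Hs (leqnn m); clear; lia.
  clear Hc QC; case => h.
  - clear -h f1 f4'; lia.
  - clear -h f1 f5; lia.
  - clear -h f2' f4'; lia.
  - clear -h f2' f5; lia.
have [F [F1 Frow Fcol]] := realize Hsum Hcut.
exists (\matrix_(i, j) F i j)%R; split; [|split].
- by move=> i j; rewrite mxE.
- by move=> i; rewrite -Frow; apply: eq_bigr => j _; rewrite mxE.
- move=> j; have -> : b j = bn j by rewrite /bn inord_val.
  rewrite -Fcol //.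
  by apply: eq_bigr => i _; rewrite mxE.
Qed.
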